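(* Let $\Omega_{2,2}$ be the co-invariant lattice of a symplectic action of $(\mathbb Z/2\mathbb Z)^2$ on a K3 surface, with discriminant group $A_{\Omega_{2,2}}\cong(\mathbb Z/2\mathbb Z)^6\times(\mathbb Z/4\mathbb Z)^2$ and discriminant quadratic form $q:A_{\Omega_{2,2}}\to\mathbb Q/2\mathbb Z$. Consider the equivalence relation on $A_{\Omega_{2,2}}$ where $r\sim s$ if $\bar\psi(r)=s$ for the isometry $\bar\psi$ of $A_{\Omega_{2,2}}$ induced by some isometry $\psi\in O(\Omega_{2,2})$. Then the non-zero elements of $A_{\Omega_{2,2}}$ split into exactly six equivalence classes, which, recorded as triples (order of the element, value of $q$, cardinality of the class), are: $(2,0,108)$, $(2,0,3)$, $(2,1,108)$, $(2,1,36)$, $(4,1/2,384)$, $(4,3/2,384)$.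
   Context: An action on a K3 surface $X$ is symplectic if it acts trivially on $H^{2,0}$. The co-invariant lattice $\Omega_{2,2}$ is the orthogonal complement in $H^2(X,\mathbb Z)$ of the $(\mathbb Z/2\mathbb Z)^2$-invariant lattice; it is negative definite of rank 12 and its isometry class does not depend on $X$. For an even lattice $S$, $A_S=S^\vee/S$ and $q_S(x+S)=x^2 \bmod 2\mathbb Z$. *)

(* Defs.v *)
From HB Require Import structures.
From mathcomp Require Import all_boot all_order all_algebra.

Set Implicit Arguments.
Unset Strict Implicit.
Unset Printing Implicit Defensive.

Import Order.TTheory GRing.Theory Num.Theory.
Local Open Scope ring_scope.

(* We model Omega_{2,2} as Z^12 with the (negative definite, even) Gram      *)
(* matrix below, i.e. the bilinear form is (x, y) |-> x^T G y.               *)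
(* The matrix was obtained as the co-invariant lattice of a   *)
(* subgroup (Z/2Z)^2 of M23 acting on the Leech lattice, scaled by -1        *)
(* (Kondo / Hashimoto: Omega_G ~= Lambda_G(-1)).  Its discriminant group is  *)
(* (Z/2Z)^6 x (Z/4Z)^2.                                                      *)

Definition Omega22_rows : seq (seq int) :=
  [:: [:: -4; -2; 2; -1; 2; -2; -2; -2; 2; 2; 2; -2];
  [:: -2; -4; 2; -2; 2; 0; 0; 0; 0; 1; 1; -1];
  [:: 2; 2; -4; 0; -2; 2; 2; 2; 0; -2; -2; 2];
  [:: -1; -2; 0; -4; 0; 1; 0; 1; -1; -1; -1; 1];
  [:: 2; 2; -2; 0; -4; 2; 0; 2; -2; -1; -1; 1];
  [:: -2; 0; 2; 1; 2; -4; -2; -2; 2; 1; 1; -1];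
  [:: -2; 0; 2; 0; 0; -2; -4; -2; 0; 1; 1; -1];
  [:: -2; 0; 2; 1; 2; -2; -2; -4; 2; 2; 2; -2];
  [:: 2; 0; 0; -1; -2; 2; 0; 2; -4; -1; -1; 1];
  [:: 2; 1; -2; -1; -1; 1; 1; 2; -1; -4; -2; 2];
  [:: 2; 1; -2; -1; -1; 1; 1; 2; -1; -2; -4; 2];
  [:: -2; -1; 2; 1; 1; -1; -1; -2; 1; 2; 2; -4]].

Definition Omega22_gram : 'M[rat]_12 :=
  \matrix_(i < 12, j < 12) (((nth [::] Omega22_rows i)`_j)%:~R : rat).

Definition intmx (m n : nat) (M : 'M[rat]_(m, n)) : Prop :=
  forall i j, M i j \is a Num.int.

(* Vectors of Omega_{2,2} (x) Q are column vectors of coordinates in the    *)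
(* lattice basis; the lattice itself is the set of integral vectors.         *)
Definition in_Omega (v : 'cV[rat]_12) : Prop := intmx v.

Definition in_dual (v : 'cV[rat]_12) : Prop := intmx (Omega22_gram *m v).

Definition sqnorm (v : 'cV[rat]_12) : rat := (v^T *m Omega22_gram *m v) 0 0.

Definition disc_q_is (v : 'cV[rat]_12) (c : rat) : Prop :=
  (sqnorm v - c) / 2 \is a Num.int.

Definition disc_order_is (v : 'cV[rat]_12) (k : nat) : Prop :=
  (0 < k)%N /\ in_Omega (k%:R *: v) /\
  forall m : nat, (0 < m)%N -> (m < k)%N -> ~ in_Omega (m%:R *: v).

(* psi in O(Omega_{2,2}): an integral matrix preserving the Gram matrix     *)
(* (it is then automatically invertible over Z, since det psi = +-1).        *)
Definition isometry_Omega (psi : 'M[rat]_12) : Prop :=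
  intmx psi /\ psi^T *m Omega22_gram *m psi = Omega22_gram.

Definition disc_equiv (r s : 'cV[rat]_12) : Prop :=
  exists psi, isometry_Omega psi /\ in_Omega (psi *m r - s).

Definition disc_class_card (r : 'cV[rat]_12) (n : nat) : Prop :=
  exists s : seq 'cV[rat]_12,
    [/\ size s = n,
        (forall x, x \in s -> in_dual x /\ disc_equiv r x),
        (forall i j, (i < n)%N -> (j < n)%N -> i <> j ->
           ~ in_Omega (nth 0 s i - nth 0 s j)) &
        (forall x, in_dual x -> disc_equiv r x ->
           exists2 y, y \in s & in_Omega (x - y))].

(* Main.v *)
Require Import Defs.
From HB Require Import structures.
From mathcomp Require Import all_boot all_order all_algebra.
From mathcomp Require Import zify ring lra.
From Stdlib Require BinNat.

Set Implicit Arguments.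
Unset Strict Implicit.
Unset Printing Implicit Defensive.
Import Order.TTheory GRing.Theory Num.Theory.
Local Open Scope ring_scope.

Definition nth2 (s : seq (seq rat)) i j := (nth [::] s i)`_j.
Definition cv (s : seq rat) : 'cV[rat]_12 := \col_i s`_i.
Definition mx (s : seq (seq rat)) : 'M[rat]_12 := \matrix_(i, j) nth2 s i j.
Definition sum12 (F : nat -> rat) := foldr (fun k acc => F k + acc) 0 (iota 0 12).
Definition dotl (r v : seq rat) := sum12 (fun k => r`_k * v`_k).
Definition mulmv (M : seq (seq rat)) (v : seq rat) := mkseq (fun i => dotl (nth [::] M i) v) 12.
Definition mulmm (A B : seq (seq rat)) :=
  mkseq (fun i => mkseq (fun j => sum12 (fun k => nth2 A i k * nth2 B k j)) 12) 12.
Definition trl (A : seq (seq rat)) := mkseq (fun i => mkseq (fun j => nth2 A j i) 12) 12.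
Definition addl (a b : seq rat) := mkseq (fun i => a`_i + b`_i) 12.
Definition subl (a b : seq rat) := mkseq (fun i => a`_i - b`_i) 12.
Definition scalel (c : rat) (a : seq rat) := mkseq (fun i => c * a`_i) 12.
Definition isint (a : rat) : bool := denq a == 1.
Definition isintl (a : seq rat) := all (fun i => isint a`_i) (iota 0 12).
Definition isintm (A : seq (seq rat)) := all (fun i => isintl (nth [::] A i)) (iota 0 12).
Definition Gl : seq (seq rat) := map (map (fun z : int => z%:~R)) Omega22_rows.
Definition sqn (v : seq rat) := dotl v (mulmv Gl v).
Definition idl : seq (seq rat) := mkseq (fun i => mkseq (fun j => (i == j)%:R) 12) 12.
Definition eqm (A B : seq (seq rat)) :=
  all (fun i => all (fun j => nth2 A i j == nth2 B i j) (iota 0 12)) (iota 0 12).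

Lemma mem_iota12 (i : 'I_12) : (i : nat) \in iota 0 12.
Proof. by rewrite mem_iota leq0n add0n ltn_ord. Qed.

Lemma foldr_sum (F : nat -> rat) s : foldr (fun k acc => F k + acc) 0 s = \sum_(k <- s) F k.
Proof. elim: s => [|a s IH] /=; first by rewrite big_nil. by rewrite big_cons IH. Qed.
Lemma sum12E F : sum12 F = \sum_(k < 12) F k.
Proof. by rewrite /sum12 foldr_sum -(big_mkord xpredT). Qed.

Lemma isintP a : reflect (a \is a Num.int) (isint a).
Proof. by rewrite Qint_def; apply: idP. Qed.

Lemma mx_mul A B : mx A *m mx B = mx (mulmm A B).
Proof.
apply/matrixP => i j; rewrite !mxE /nth2 /mulmm nth_mkseq // nth_mkseq // sum12E.
by apply: eq_bigr => k _; rewrite !mxE.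
Qed.

Lemma mx_mv A v : mx A *m cv v = cv (mulmv A v).
Proof.
apply/matrixP => i j; rewrite !mxE /mulmv nth_mkseq // /dotl sum12E.
by apply: eq_bigr => k _; rewrite !mxE.
Qed.

Lemma mx_tr A : (mx A)^T = mx (trl A).
Proof. by apply/matrixP => i j; rewrite !mxE /nth2 /trl nth_mkseq // nth_mkseq. Qed.

Lemma cv_add a b : cv a + cv b = cv (addl a b).
Proof. by apply/matrixP => i j; rewrite !mxE /addl nth_mkseq. Qed.
Lemma cv_sub a b : cv a - cv b = cv (subl a b).
Proof. by apply/matrixP => i j; rewrite !mxE /subl nth_mkseq. Qed.
Lemma cv_scale c a : c *: cv a = cv (scalel c a).
Proof. by apply/matrixP => i j; rewrite !mxE /scalel nth_mkseq. Qed.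

Lemma mx_id : mx idl = 1%:M.
Proof. by apply/matrixP => i j; rewrite !mxE /nth2 /idl nth_mkseq // nth_mkseq. Qed.

Lemma eqmP A B : eqm A B -> mx A = mx B.
Proof.
move=> /allP H; apply/matrixP => i j; rewrite !mxE.
have /allP := H i (mem_iota12 _).
by move/(_ j (mem_iota12 _)) => /eqP.
Qed.

Lemma isintlP a : reflect (in_Omega (cv a)) (isintl a).
Proof.
apply: (iffP allP) => [H i j|H i]; first by rewrite mxE; apply/isintP/H/mem_iota12.
rewrite mem_iota leq0n add0n /= => Hi; apply/isintP.
by have := H (Ordinal Hi) ord0; rewrite mxE.
Qed.

Lemma isintmP A : isintm A -> intmx (mx A).
Proof.
move=> /allP H i j; rewrite mxE; have /allP := H i (mem_iota12 _).
by move/(_ j (mem_iota12 _)) => /isintP.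
Qed.

Lemma nth_map0 (T U : nmodType) (f : T -> U) (s : seq T) i : f 0 = 0 -> (map f s)`_i = f s`_i.
Proof. move=> f0; elim: s i => [|a s IH] [|i] //=. Qed.

Lemma nth_mapnil (T U : Type) (f : seq T -> seq U) (s : seq (seq T)) i : f [::] = [::] ->
  nth [::] (map f s) i = f (nth [::] s i).
Proof. move=> f0; elim: s i => [|a s IH] [|i] //=. Qed.

Lemma gram_mx : Omega22_gram = mx Gl.
Proof.
apply/matrixP => i j; rewrite !mxE /nth2 /Gl (@nth_mapnil _ _ (fun l : seq int => map (fun z : int => (z%:~R : rat)) l)) //.
by rewrite (@nth_map0 _ _ (fun z : int => (z%:~R : rat))).
Qed.
Definition reps_l : seq (seq rat) :=
  [:: [:: 0; 0; 0; 0; 0; 0; (1/2); (1/2); (1/2); 0; (1/2); (1/2)];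
    [:: 0; (1/2); 0; 0; (1/2); 0; (1/2); (1/2); (1/2); 0; 0; 0];
    [:: 0; 0; 0; 0; 0; (1/2); (1/2); (1/2); 0; 0; (1/2); (1/2)];
    [:: 0; 0; 0; 0; 0; 0; 0; 0; 0; 0; (1/2); (1/2)];
    [:: 0; (1/4); 0; (1/2); (1/4); 0; (1/4); (1/4); (1/4); 0; 0; (1/2)];
    [:: 0; (1/4); 0; (1/2); (1/4); 0; (1/4); (1/4); (1/4); (1/2); (1/2); (1/2)]].

Definition gen0_l : seq (seq rat) :=
  [:: [:: 0; 0; 0; 1; 0; 0; (-1); 0; 0; (-1); 2; 1];
    [:: 0; 0; 1; 1; 0; 0; 0; (-1); 0; 1; 2; (-1)];
    [:: 0; (-1); 1; 0; 1; 0; 0; (-1); 0; 1; 0; (-1)];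
    [:: 0; 0; 0; (-1); 0; 0; 0; 0; 0; 0; (-2); 0];
    [:: 0; 0; 1; 1; 0; 0; 0; 0; 0; 0; 2; 0];
    [:: (-1); (-1); 1; 0; 1; 0; 0; (-1); 1; 1; 1; (-1)];
    [:: 1; 0; (-1); (-1); (-1); 1; 1; 1; (-1); 0; (-2); 0];
    [:: 0; 0; 1; 1; 1; 0; 0; (-1); 0; 0; 2; 0];
    [:: 0; 0; 0; 1; 1; 0; 0; (-1); 1; 0; 1; 0];
    [:: 0; 0; 0; 1; 0; 0; 0; 0; 0; 0; 1; 0];
    [:: 0; 0; 0; 0; 0; 0; 0; 0; 0; (-1); 1; 0];
    [:: 0; 0; 0; 0; 0; 0; 0; 0; 0; 0; (-1); (-1)]].

Definition gen1_l : seq (seq rat) :=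
  [:: [:: 1; 3; (-1); 2; 0; (-1); 1; (-1); 2; 0; 0; 0];
    [:: 0; 0; 1; 1; 1; (-1); 0; (-1); 1; 1; 0; 0];
    [:: 0; (-1); 0; (-1); 0; 1; 0; 0; 0; 0; 0; 1];
    [:: (-1); (-2); 0; (-2); 0; 1; 0; 1; (-1); 0; 0; 0];
    [:: 0; 1; 1; 1; 1; (-2); 0; (-1); 1; 1; 0; 0];
    [:: 0; 0; 0; 0; 0; 0; 0; 0; 0; 1; 0; 1];
    [:: (-1); (-2); 1; (-1); 0; 1; (-1); 0; (-1); 0; 1; (-1)];
    [:: 1; 1; 0; 1; 1; (-1); 1; 0; 1; 0; (-1); 1];
    [:: 1; 1; (-1); 1; 0; 0; 1; 0; 1; 0; 0; 1];
    [:: 1; 1; 0; 1; 0; 0; 1; 0; 0; 0; 0; 0];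
    [:: 0; 1; 0; 1; 1; (-1); 0; (-1); 1; 0; 0; 0];
    [:: 0; (-1); 0; (-1); 0; 1; 0; 0; (-1); 0; 0; 0]].

Definition Gi_l : seq (seq rat) :=
  [:: [:: (-9/2); (-3/4); 1; (5/2); (-9/4); 0; (11/4); (-9/4); (-7/4); (-3/2); (-3/2); (3/2)];
    [:: (-3/4); (-3/2); (-1/4); 1; (-5/4); (-1/2); (3/4); (-5/4); (-1/2); (-1/2); (-1/2); (1/2)];
    [:: 1; (-1/4); (-3/2); (-1/2); (3/4); (-1/2); (-3/4); (1/4); (-1/4); (1/2); (1/2); (-1/2)];
    [:: (5/2); 1; (-1/2); (-2); (3/2); 0; (-3/2); (3/2); 1; 1; 1; (-1)];
    [:: (-9/4); (-5/4); (3/4); (3/2); (-5/2); (-1/2); 2; (-2); (-3/4); (-1); (-1); 1];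
    [:: 0; (-1/2); (-1/2); 0; (-1/2); (-1); (1/2); (-1/2); (-1/2); 0; 0; 0];
    [:: (11/4); (3/4); (-3/4); (-3/2); 2; (1/2); (-5/2); 2; (5/4); 1; 1; (-1)];
    [:: (-9/4); (-5/4); (1/4); (3/2); (-2); (-1/2); 2; (-5/2); (-5/4); (-1); (-1); 1];
    [:: (-7/4); (-1/2); (-1/4); 1; (-3/4); (-1/2); (5/4); (-5/4); (-3/2); (-1/2); (-1/2); (1/2)];
    [:: (-3/2); (-1/2); (1/2); 1; (-1); 0; 1; (-1); (-1/2); (-1); (-1/2); (1/2)];
    [:: (-3/2); (-1/2); (1/2); 1; (-1); 0; 1; (-1); (-1/2); (-1/2); (-1); (1/2)];
    [:: (3/2); (1/2); (-1/2); (-1); 1; 0; (-1); 1; (1/2); (1/2); (1/2); (-1)]].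

Definition y3_l : seq rat := [:: 0; 0; 0; 0; 0; 0; 0; 0; 0; 0; (-1/2); (-1/2)].

Definition F_l : seq (seq rat) :=
  [:: [:: 0; 0; 0; 0; 0; 0; 0; 0; 0; (-1); 0; (-1)];
    [:: 0; 0; 0; 0; 0; 0; 0; 0; 0; 0; 0; (-1)];
    [:: 0; 0; 0; 1; 0; 0; 0; 0; 0; 0; 0; (-1)];
    [:: (-1); 0; 1; 0; 0; (-1); (-1); (-1); 0; 1; 1; (-1)];
    [:: (-1); (-1); 2; 0; 1; (-1); (-1); (-1); 0; 1; 1; (-1)];
    [:: (-1); 0; 0; 0; 0; 0; 0; (-1); 1; 1; 1; (-1)];
    [:: 0; 0; 0; (-1); 0; 0; 0; 0; 0; (-1); (-1); 0];
    [:: 0; 1; 0; 0; (-1); 0; (-1); 0; (-1); 0; 0; 0];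
    [:: 1; 0; 0; 0; (-1); 1; 0; 0; (-1); 0; 0; 0];
    [:: 0; (-1); 0; (-1); 0; 1; 0; 0; (-1); 0; 0; 0];
    [:: 1; 0; 0; 0; (-1); 1; 1; 1; (-1); 0; 0; 0];
    [:: 1; 1; 0; 1; 0; 0; 0; (-1); 0; 0; 0; 0]].

Definition Finv_l : seq (seq rat) :=
  [:: [:: 0; (3/2); (-1); 0; 0; (-1/2); (-1/2); (-1/2); 1; (-1/2); (-1/2); 0];
    [:: 0; (1/2); (-1/2); (-1); (1/2); (1/2); 0; 1; (-1); 0; (1/2); (1/2)];
    [:: 0; (-1/2); 0; (-1); 1; (1/2); (1/2); (1/2); 0; (-1/2); (1/2); 0];
    [:: 0; (-1); 1; 0; 0; 0; 0; 0; 0; 0; 0; 0];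
    [:: 0; 1; (-1/2); (-1); (1/2); 0; (-1/2); (1/2); (-1); (1/2); 0; (1/2)];
    [:: 0; 0; 0; (-2); 1; 1; 0; 1; 0; 0; 0; 0];
    [:: 0; (-1); (1/2); 1; (-1/2); 0; (1/2); (-1/2); (-1); (1/2); 1; (1/2)];
    [:: 0; 1; (-1/2); (-1); (1/2); 0; (-1/2); (1/2); 0; (-1/2); 0; (-1/2)];
    [:: 0; (1/2); (-1/2); (-1); (1/2); (1/2); 0; 0; 1; (-1); (-1/2); (-1/2)];
    [:: (-1); 1; 0; 0; 0; 0; 0; 0; 0; 0; 0; 0];
    [:: 1; 0; (-1); 0; 0; 0; (-1); 0; 0; 0; 0; 0];
    [:: 0; (-1); 0; 0; 0; 0; 0; 0; 0; 0; 0; 0]].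

Definition certL_l : seq (seq (seq rat)) :=
  [:: [:: [:: 1; (1/2); (-1/2); (1/4); (-1/2); (1/2); (1/2); (1/2); (-1/2); (-1/2); (-1/2); (1/2)];
    [:: 0; 1; (-1/3); (1/2); (-1/3); (-1/3); (-1/3); (-1/3); (1/3); 0; 0; 0];
    [:: 0; 0; 1; (3/8); (1/4); (-1/2); (-1/2); (-1/2); (-1/4); (3/8); (3/8); (-3/8)];
    [:: 0; 0; 0; 1; (2/7); (-4/21); (4/21); (-4/21); (10/21); (3/7); (3/7); (-3/7)];
    [:: 0; 0; 0; 0; 1; (-3/8); (3/8); (-3/8); (1/2); (-1/4); (-1/4); (1/4)];
    [:: 0; 0; 0; 0; 0; 1; (5/19); (-5/19); (-4/19); (6/19); (6/19); (-6/19)];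
    [:: 0; 0; 0; 0; 0; 0; 1; (5/14); (2/7); (1/4); (1/4); (-1/4)];
    [:: 0; 0; 0; 0; 0; 0; 0; 1; (-4/9); (-7/18); (-7/18); (7/18)];
    [:: 0; 0; 0; 0; 0; 0; 0; 0; 1; (-1/4); (-1/4); (1/4)];
    [:: 0; 0; 0; 0; 0; 0; 0; 0; 0; 1; (-1); (-1)];
    [:: 0; 0; 0; 0; 0; 0; 0; 0; 0; 0; 1; 0];
    [:: 0; 0; 0; 0; 0; 0; 0; 0; 0; 0; 0; 0]];
  [:: [:: 1; (1/2); (-1/2); (1/4); (-1/2); (1/2); (1/2); (1/2); (-1/2); (-1/2); (-1/2); (1/2)];
    [:: 0; 1; (-1/3); (1/2); (-1/3); (-1/3); (-1/3); (-1/3); (1/3); 0; 0; 0];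
    [:: 0; 0; 1; (3/8); (1/4); (-1/2); (-1/2); (-1/2); (-1/4); (3/8); (3/8); (-3/8)];
    [:: 0; 0; 0; 1; (2/7); (-4/21); (4/21); (-4/21); (10/21); (3/7); (3/7); (-3/7)];
    [:: 0; 0; 0; 0; 1; (-3/8); (3/8); (-3/8); (1/2); (-1/4); (-1/4); (1/4)];
    [:: 0; 0; 0; 0; 0; 1; (5/19); (-5/19); (-4/19); (6/19); (6/19); (-6/19)];
    [:: 0; 0; 0; 0; 0; 0; 1; (5/14); (2/7); (1/4); (1/4); (-1/4)];
    [:: 0; 0; 0; 0; 0; 0; 0; 1; (-4/9); (-7/18); (-7/18); (7/18)];
    [:: 0; 0; 0; 0; 0; 0; 0; 0; 1; (-1/4); (-1/4); (1/4)];
    [:: 0; 0; 0; 0; 0; 0; 0; 0; 0; 1; (-1/3); (1/3)];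
    [:: 0; 0; 0; 0; 0; 0; 0; 0; 0; 0; 1; (1/2)];
    [:: 0; 0; 0; 0; 0; 0; 0; 0; 0; 0; 0; 0]];
  [:: [:: 1; (1/2); (-1/2); (1/4); (-1/2); (1/2); (1/2); (1/2); (-1/2); (-1/2); (-1/2); (1/2)];
    [:: 0; 1; (-1/3); (1/2); (-1/3); (-1/3); (-1/3); (-1/3); (1/3); 0; 0; 0];
    [:: 0; 0; 1; (3/8); (1/4); (-1/2); (-1/2); (-1/2); (-1/4); (3/8); (3/8); (-3/8)];
    [:: 0; 0; 0; 1; (6/13); (-4/13); (4/13); (-4/13); (10/13); (9/13); (9/13); (-1/13)];
    [:: 0; 0; 0; 0; 1; (-5/14); (5/14); (-5/14); (3/7); (-5/14); (-5/14); (1/7)];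
    [:: 0; 0; 0; 0; 0; 1; (3/11); (-3/11); (-2/11); (4/11); (4/11); (-3/11)];
    [:: 0; 0; 0; 0; 0; 0; 1; (3/8); (1/4); (3/16); (3/16); (-5/16)];
    [:: 0; 0; 0; 0; 0; 0; 0; 1; (-2/5); (-3/10); (-3/10); (1/2)];
    [:: 0; 0; 0; 0; 0; 0; 0; 0; 1; (-1/2); (-1/2); 0];
    [:: 0; 0; 0; 0; 0; 0; 0; 0; 0; 1; (-1); 0];
    [:: 0; 0; 0; 0; 0; 0; 0; 0; 0; 0; 0; 1];
    [:: 0; 0; 0; 0; 0; 0; 0; 0; 0; 0; 0; 0]];
  [:: [:: 1; (2/3); (-1/3); (1/3); (-2/3); (1/3); (1/3); (1/3); (-2/3); (-1/3); (-1/3); (1/3)];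
    [:: 0; 1; (-1/2); (1/2); (-1/4); (-1/4); (-1/4); (-1/4); (1/2); (-1/8); (-1/8); (1/8)];
    [:: 0; 0; 1; (1/2); (1/2); (-1/2); (-1/2); (-1/2); 0; (1/4); (1/4); (-1/4)];
    [:: 0; 0; 0; 1; (1/5); (-1/5); (1/5); (-1/5); (2/5); (1/2); (1/2); (-1/2)];
    [:: 0; 0; 0; 0; 1; (-9/19); (9/19); (-9/19); (8/19); (-5/38); (-5/38); (5/38)];
    [:: 0; 0; 0; 0; 0; 1; (5/14); (-5/14); (-2/7); (3/7); (3/7); (-3/7)];
    [:: 0; 0; 0; 0; 0; 0; 1; (5/9); (4/9); (1/9); (1/9); (-1/9)];
    [:: 0; 0; 0; 0; 0; 0; 0; 1; (-1); (-1/4); (-1/4); (1/4)];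
    [:: 0; 0; 0; 0; 0; 0; 0; 0; 0; 1; (-1/3); (1/3)];
    [:: 0; 0; 0; 0; 0; 0; 0; 0; 0; 0; 1; (1/2)];
    [:: 0; 0; 0; 0; 0; 0; 0; 0; 0; 0; 0; 1];
    [:: 0; 0; 0; 0; 0; 0; 0; 0; 0; 0; 0; 0]];
  [:: [:: 1; (1/3); 0; (1/3); (-1/3); (1/3); (1/3); (1/3); (-2/3); (-1/3); (-1/3); (1/3)];
    [:: 0; 1; 0; (5/8); (-1/4); (-1/2); (-1/2); (-1/2); (1/4); (1/8); (1/8); (-1/8)];
    [:: 0; 0; 0; 1; (2/7); (-4/21); (4/21); (-4/21); (10/21); (3/7); (3/7); (-3/7)];
    [:: 0; 0; 0; 0; 1; (-3/8); (3/8); (-3/8); (1/2); (-1/4); (-1/4); (1/4)];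
    [:: 0; 0; 0; 0; 0; 1; (5/19); (-5/19); (-4/19); (6/19); (6/19); (-6/19)];
    [:: 0; 0; 0; 0; 0; 0; 1; (5/14); (2/7); (1/4); (1/4); (-1/4)];
    [:: 0; 0; 0; 0; 0; 0; 0; 1; (-4/9); (-7/18); (-7/18); (7/18)];
    [:: 0; 0; 0; 0; 0; 0; 0; 0; 1; (-1/4); (-1/4); (1/4)];
    [:: 0; 0; 0; 0; 0; 0; 0; 0; 0; 1; (-1/3); (1/3)];
    [:: 0; 0; 0; 0; 0; 0; 0; 0; 0; 0; 1; (1/2)];
    [:: 0; 0; 0; 0; 0; 0; 0; 0; 0; 0; 0; 1];
    [:: 0; 0; 0; 0; 0; 0; 0; 0; 0; 0; 0; 0]];
  [:: [:: 1; (2/3); (-2/3); (1/3); (-2/3); (2/3); (2/3); (1/3); (-1/3); (-1/3); (-1/3); (1/3)];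
    [:: 0; 1; (-1/4); (1/2); (-1/4); (-1/2); (-1/2); (-1/4); (1/4); (-1/8); (-1/8); (1/8)];
    [:: 0; 0; 1; (2/5); (1/5); (-2/5); (-2/5); (-3/5); (-1/5); (1/2); (1/2); (-1/2)];
    [:: 0; 0; 0; 1; (4/13); (-3/13); (2/13); (-2/13); (6/13); (5/13); (5/13); (-5/13)];
    [:: 0; 0; 0; 0; 1; (-2/7); (1/2); (-1/2); (4/7); (-1/7); (-1/7); (1/7)];
    [:: 0; 0; 0; 0; 0; 1; 0; 0; (-4/9); (1/9); (1/9); (-1/9)];
    [:: 0; 0; 0; 0; 0; 0; 1; 1; 0; 0; 0; 0];
    [:: 0; 0; 0; 0; 0; 0; 0; 0; 1; (-1/4); (-1/4); (1/4)];
    [:: 0; 0; 0; 0; 0; 0; 0; 0; 0; 1; (-1/3); (1/3)];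
    [:: 0; 0; 0; 0; 0; 0; 0; 0; 0; 0; 1; (1/2)];
    [:: 0; 0; 0; 0; 0; 0; 0; 0; 0; 0; 0; 1];
    [:: 0; 0; 0; 0; 0; 0; 0; 0; 0; 0; 0; 0]];
  [:: [:: 1; (1/2); (-1/2); (1/4); (-1/2); (1/2); (1/2); (1/2); (-1/2); (-1/2); (-1/2); (1/2)];
    [:: 0; 1; (-1/3); (1/2); (-1/3); (-1/3); (-1/3); (-1/3); (1/3); 0; 0; 0];
    [:: 0; 0; 1; (3/8); (1/4); (-1/2); (-1/2); (-1/2); (-1/4); (3/8); (3/8); (-3/8)];
    [:: 0; 0; 0; 1; (6/13); (-4/13); (4/13); (-4/13); (10/13); (1/13); (1/13); (-9/13)];
    [:: 0; 0; 0; 0; 1; (-5/14); (5/14); (-5/14); (3/7); (-1/7); (-1/7); (5/14)];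
    [:: 0; 0; 0; 0; 0; 1; (3/11); (-3/11); (-2/11); (3/11); (3/11); (-4/11)];
    [:: 0; 0; 0; 0; 0; 0; 1; (3/8); (1/4); (5/16); (5/16); (-3/16)];
    [:: 0; 0; 0; 0; 0; 0; 0; 1; (-2/5); (-1/2); (-1/2); (3/10)];
    [:: 0; 0; 0; 0; 0; 0; 0; 0; 1; 0; 0; (1/2)];
    [:: 0; 0; 0; 0; 0; 0; 0; 0; 0; 1; (-1); 0];
    [:: 0; 0; 0; 0; 0; 0; 0; 0; 0; 0; 0; 1];
    [:: 0; 0; 0; 0; 0; 0; 0; 0; 0; 0; 0; 0]];
  [:: [:: 1; (1/2); (-1/2); (1/4); (-1/2); (1/2); (1/2); (1/2); (-1/2); (-1/2); (-1/2); (1/2)];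
    [:: 0; 1; (-1/2); (3/4); 0; (-1/2); 0; (-1/2); 1; 0; 0; 0];
    [:: 0; 0; 1; (1/2); (2/5); (-3/5); (-2/5); (-3/5); 0; (2/5); (2/5); (-2/5)];
    [:: 0; 0; 0; 1; 0; 0; 0; 0; 0; (1/2); (1/2); (-1/2)];
    [:: 0; 0; 0; 0; 1; (-1/4); (1/4); (-1/4); 0; (-1/4); (-1/4); (1/4)];
    [:: 0; 0; 0; 0; 0; 1; (1/3); (-1/3); 0; (1/3); (1/3); (-1/3)];
    [:: 0; 0; 0; 0; 0; 0; 1; (1/2); 0; (1/4); (1/4); (-1/4)];
    [:: 0; 0; 0; 0; 0; 0; 0; 1; 0; (-1/2); (-1/2); (1/2)];
    [:: 0; 0; 0; 0; 0; 0; 0; 0; 0; 1; (-1/3); (1/3)];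
    [:: 0; 0; 0; 0; 0; 0; 0; 0; 0; 0; 1; (1/2)];
    [:: 0; 0; 0; 0; 0; 0; 0; 0; 0; 0; 0; 1];
    [:: 0; 0; 0; 0; 0; 0; 0; 0; 0; 0; 0; 0]];
  [:: [:: 1; (2/3); (-2/3); (1/3); (-1/3); (1/3); (2/3); (2/3); (-1/3); (-2/3); (-2/3); (2/3)];
    [:: 0; 1; (-1/4); (1/2); (-1/2); (-1/4); (-1/2); (-1/2); (1/4); (1/8); (1/8); (-1/8)];
    [:: 0; 0; 1; (2/5); (2/5); (-3/5); (-2/5); (-2/5); (-1/5); (3/10); (3/10); (-3/10)];
    [:: 0; 0; 0; 1; (3/13); (-2/13); (2/13); (-3/13); (6/13); (6/13); (6/13); (-6/13)];
    [:: 0; 0; 0; 0; 1; (-4/19); (4/19); (-1); (12/19); (-1/19); (-1/19); (1/19)];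
    [:: 0; 0; 0; 0; 0; 1; (5/14); 0; (-2/7); (1/4); (1/4); (-1/4)];
    [:: 0; 0; 0; 0; 0; 0; 1; 0; (4/9); (7/18); (7/18); (-7/18)];
    [:: 0; 0; 0; 0; 0; 0; 0; 0; 1; (-1/4); (-1/4); (1/4)];
    [:: 0; 0; 0; 0; 0; 0; 0; 0; 0; 1; (-1/3); (1/3)];
    [:: 0; 0; 0; 0; 0; 0; 0; 0; 0; 0; 1; (1/2)];
    [:: 0; 0; 0; 0; 0; 0; 0; 0; 0; 0; 0; 1];
    [:: 0; 0; 0; 0; 0; 0; 0; 0; 0; 0; 0; 0]];
  [:: [:: 1; (1/2); (-1/2); (1/4); (-1/2); (1/2); (1/2); (1/2); (-1/2); (-1/2); (-1/2); (1/2)];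
    [:: 0; 1; (-1/2); (1/4); (-1/2); 0; (-1/2); (-1/2); 0; 0; 0; 0];
    [:: 0; 0; 1; (3/10); (1/5); (-2/5); (-3/5); (-3/5); (-2/5); (2/5); (2/5); (-2/5)];
    [:: 0; 0; 0; 1; (1/4); (-1/12); (1/12); (-1/3); (1/3); (1/2); (1/2); (-1/2)];
    [:: 0; 0; 0; 0; 1; (-1/3); (1/3); (-4/9); (4/9); (-2/9); (-2/9); (2/9)];
    [:: 0; 0; 0; 0; 0; 1; (1/2); 0; 0; (1/4); (1/4); (-1/4)];
    [:: 0; 0; 0; 0; 0; 0; 1; 0; 0; (1/2); (1/2); (-1/2)];
    [:: 0; 0; 0; 0; 0; 0; 0; 1; (-1); (-1/4); (-1/4); (1/4)];
    [:: 0; 0; 0; 0; 0; 0; 0; 0; 0; 1; (-1/3); (1/3)];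
    [:: 0; 0; 0; 0; 0; 0; 0; 0; 0; 0; 1; (1/2)];
    [:: 0; 0; 0; 0; 0; 0; 0; 0; 0; 0; 0; 1];
    [:: 0; 0; 0; 0; 0; 0; 0; 0; 0; 0; 0; 0]];
  [:: [:: 1; (2/3); (-2/3); (1/3); (-1/3); (1/3); (1/3); (1/3); (-1/3); (-2/3); (-2/3); (2/3)];
    [:: 0; 1; (-1/4); (1/2); (-1/2); (-1/4); (-1/4); (-1/4); (1/4); (1/8); (1/8); (-1/8)];
    [:: 0; 0; 1; (2/5); (2/5); (-3/5); (-3/5); (-3/5); (-1/5); (3/10); (3/10); (-3/10)];
    [:: 0; 0; 0; 1; (3/13); (-2/13); (3/13); (-2/13); (6/13); (6/13); (6/13); (-6/13)];
    [:: 0; 0; 0; 0; 1; (-4/19); 1; (-4/19); (12/19); (-1/19); (-1/19); (1/19)];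
    [:: 0; 0; 0; 0; 0; 1; 0; (-5/14); (-2/7); (1/4); (1/4); (-1/4)];
    [:: 0; 0; 0; 0; 0; 0; 0; 1; (-4/9); (-7/18); (-7/18); (7/18)];
    [:: 0; 0; 0; 0; 0; 0; 0; 0; 1; (-1/4); (-1/4); (1/4)];
    [:: 0; 0; 0; 0; 0; 0; 0; 0; 0; 1; (-1/3); (1/3)];
    [:: 0; 0; 0; 0; 0; 0; 0; 0; 0; 0; 1; (1/2)];
    [:: 0; 0; 0; 0; 0; 0; 0; 0; 0; 0; 0; 1];
    [:: 0; 0; 0; 0; 0; 0; 0; 0; 0; 0; 0; 0]];
  [:: [:: 1; (1/3); (-2/3); 0; (-2/3); (2/3); (2/3); 1; (-2/3); (-2/3); (-2/3); (2/3)];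
    [:: 0; 1; (-1/2); (3/8); (-1/2); (-1/4); (-1/4); 0; (1/4); (-1/8); (-1/8); (1/8)];
    [:: 0; 0; 1; (1/4); 0; (-1/2); (-1/2); 0; (-1/2); (1/4); (1/4); (-1/4)];
    [:: 0; 0; 0; 1; (1/5); (-1/5); (1/5); 0; (2/5); (2/5); (2/5); (-2/5)];
    [:: 0; 0; 0; 0; 1; (-9/19); (9/19); 0; (8/19); (-7/19); (-7/19); (7/19)];
    [:: 0; 0; 0; 0; 0; 1; (5/14); 0; (-2/7); (1/4); (1/4); (-1/4)];
    [:: 0; 0; 0; 0; 0; 0; 1; 0; (4/9); (7/18); (7/18); (-7/18)];
    [:: 0; 0; 0; 0; 0; 0; 0; 0; 1; (-1/4); (-1/4); (1/4)];
    [:: 0; 0; 0; 0; 0; 0; 0; 0; 0; 1; (-1/3); (1/3)];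
    [:: 0; 0; 0; 0; 0; 0; 0; 0; 0; 0; 1; (1/2)];
    [:: 0; 0; 0; 0; 0; 0; 0; 0; 0; 0; 0; 1];
    [:: 0; 0; 0; 0; 0; 0; 0; 0; 0; 0; 0; 0]]].

Definition certd_l : seq (seq rat) :=
  [:: [:: 4; 3; (8/3); (21/8); (16/7); (19/12); (28/19); (9/7); (8/9); (1/2); 1; 0];
  [:: 4; 3; (8/3); (21/8); (16/7); (19/12); (28/19); (9/7); (8/9); (3/2); (4/3); 0];
  [:: 4; 3; (8/3); (13/8); (28/13); (11/7); (16/11); (5/4); (4/5); 1; 1; 0];
  [:: 3; (8/3); 2; (5/2); (19/10); (28/19); (9/7); (8/9); (3/2); (4/3); 1; 0];
  [:: 3; (8/3); (21/8); (16/7); (19/12); (28/19); (9/7); (8/9); (3/2); (4/3); 1; 0];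
  [:: 3; (8/3); (5/2); (13/5); (28/13); (9/7); 1; (8/9); (3/2); (4/3); 1; 0];
  [:: 4; 3; (8/3); (13/8); (28/13); (11/7); (16/11); (5/4); (4/5); 1; 1; 0];
  [:: 4; 2; (5/2); 2; (8/5); (3/2); (4/3); 1; (3/2); (4/3); 1; 0];
  [:: 3; (8/3); (5/2); (13/5); (19/13); (28/19); (9/7); (8/9); (3/2); (4/3); 1; 0];
  [:: 4; 2; (5/2); (12/5); (9/4); (4/3); 1; (8/9); (3/2); (4/3); 1; 0];
  [:: 3; (8/3); (5/2); (13/5); (19/13); (28/19); (9/7); (8/9); (3/2); (4/3); 1; 0];
  [:: 3; (8/3); 2; (5/2); (19/10); (28/19); (9/7); (8/9); (3/2); (4/3); 1; 0]].
Definition u1_l : seq rat := [:: 0; (1/4); 0; (1/2); (1/4); 0; (1/4); (1/4); (1/4); 0; 0; (1/2)].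

Section IntMx.
Lemma intmxM m n p (A : 'M[rat]_(m,n)) (B : 'M[rat]_(n,p)) :
  intmx A -> intmx B -> intmx (A *m B).
Proof. by move=> HA HB i j; rewrite mxE; apply: rpred_sum => k _; apply: rpredM. Qed.
Lemma intmxD m n (A B : 'M[rat]_(m,n)) : intmx A -> intmx B -> intmx (A + B).
Proof. by move=> HA HB i j; rewrite mxE; apply: rpredD. Qed.
Lemma intmxN m n (A : 'M[rat]_(m,n)) : intmx A -> intmx (- A).
Proof. by move=> HA i j; rewrite mxE rpredN. Qed.
Lemma intmxB m n (A B : 'M[rat]_(m,n)) : intmx A -> intmx B -> intmx (A - B).
Proof. by move=> HA HB; apply: intmxD => //; apply: intmxN. Qed.
Lemma intmxZ m n (c : rat) (A : 'M[rat]_(m,n)) : c \is a Num.int -> intmx A -> intmx (c *: A).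
Proof. by move=> Hc HA i j; rewrite mxE; apply: rpredM. Qed.
Lemma intmxZn m n (k : nat) (A : 'M[rat]_(m,n)) : intmx A -> intmx (k%:R *: A).
Proof. by apply: intmxZ; apply: rpred_nat. Qed.
Lemma intmx1 n : intmx (1%:M : 'M[rat]_n).
Proof. by move=> i j; rewrite mxE; case: (i == j). Qed.
Lemma intmx0 m n : intmx (0 : 'M[rat]_(m,n)).
Proof. by move=> i j; rewrite mxE. Qed.
Lemma intmxT m n (A : 'M[rat]_(m,n)) : intmx A -> intmx A^T.
Proof. by move=> HA i j; rewrite mxE. Qed.

Lemma det_int n (A : 'M[rat]_n) : intmx A -> \det A \is a Num.int.
Proof.
move=> HA; rewrite /determinant; apply: rpred_sum => s _; apply: rpredM.
  by apply: rpredX; rewrite rpredN rpred1.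
by apply: rpred_prod => i _; apply: HA.
Qed.

Lemma adj_int n (A : 'M[rat]_n) : intmx A -> intmx (\adj A).
Proof.
move=> HA i j; rewrite /adjugate mxE /cofactor; apply: rpredM.
  by apply: rpredX; rewrite rpredN rpred1.
by apply: det_int => k l; rewrite !mxE.
Qed.
End IntMx.

Local Notation G := Omega22_gram.

Definition addm (A B : seq (seq rat)) :=
  mkseq (fun i => mkseq (fun j => nth2 A i j + nth2 B i j) 12) 12.
Lemma mx_add A B : mx A + mx B = mx (addm A B).
Proof. by apply/matrixP => i j; rewrite !mxE /addm /nth2 nth_mkseq // nth_mkseq. Qed.

Definition Ul : seq (seq rat) := mkseq (fun i => mkseq (fun j => if (i < j)%N then nth2 Gl i j else 0) 12) 12.
Definition Dl : seq (seq rat) := mkseq (fun i => mkseq (fun j => (i == j)%:R * (-4)) 12) 12.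

Lemma Dl_mx : mx Dl = (-4) *: 1%:M.
Proof. by apply/matrixP => i j; rewrite !mxE /nth2 /Dl nth_mkseq // nth_mkseq // mulrC. Qed.

Lemma G_split : G = (-4) *: 1%:M + mx Ul + (mx Ul)^T.
Proof.
rewrite gram_mx -Dl_mx mx_tr !mx_add; apply: eqmP.
by vm_compute.
Qed.

Lemma G_sym : G^T = G.
Proof. by rewrite gram_mx mx_tr; apply: eqmP; vm_compute. Qed.

Lemma G_int : intmx G.
Proof. by rewrite gram_mx; apply: isintmP; vm_compute. Qed.

Lemma Ul_int : intmx (mx Ul).
Proof. by apply: isintmP; vm_compute. Qed.

Lemma GiG : mx Gi_l *m G = 1%:M.
Proof. by rewrite gram_mx mx_mul -mx_id; apply: eqmP; vm_compute. Qed.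

Lemma detG_neq0 : \det G != 0.
Proof.
apply/eqP => H; have := congr1 determinant GiG.
by rewrite det_mulmx H mulr0 det1 => /eqP; rewrite eq_sym oner_eq0.
Qed.

Lemma iso_inv psi : isometry_Omega psi ->
  exists phi, [/\ isometry_Omega phi, phi *m psi = 1%:M & psi *m phi = 1%:M].
Proof.
case=> Hint Hiso.
set dp := \det psi.
have Hd : dp * dp = 1.
  have := congr1 determinant Hiso; rewrite !det_mulmx det_tr -/dp => H.
  have E : (dp * dp - 1) * \det G = dp * \det G * dp - \det G by ring.
  rewrite H subrr in E.
  move/eqP: E; rewrite mulf_eq0 (negbTE detG_neq0) orbF subr_eq0 => /eqP //.
have Hpl : (dp *: \adj psi) *m psi = 1%:M.
  by rewrite -scalemxAl mul_adj_mx scale_scalar_mx Hd.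
have Hpr : psi *m (dp *: \adj psi) = 1%:M.
  by rewrite -scalemxAr mul_mx_adj scale_scalar_mx Hd.
exists (dp *: \adj psi); split => //; split.
  by apply: intmxZ; [apply: det_int | apply: adj_int].
rewrite -{1}Hiso.
have -> : (dp *: \adj psi)^T *m (psi^T *m G *m psi) *m (dp *: \adj psi)
   = (psi *m (dp *: \adj psi))^T *m G *m (psi *m (dp *: \adj psi)).
  by rewrite trmx_mul !mulmxA.
by rewrite Hpr trmx1 mul1mx mulmx1.
Qed.

Lemma iso_mul p1 p2 : isometry_Omega p1 -> isometry_Omega p2 -> isometry_Omega (p2 *m p1).
Proof.
case=> I1 E1 [I2 E2]; split; first exact: intmxM.
by rewrite trmx_mul -!mulmxA (mulmxA p2^T) (mulmxA (p2^T *m G)) E2 mulmxA.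
Qed.

Lemma iso1 : isometry_Omega 1%:M.
Proof. by split; [exact: intmx1 | rewrite trmx1 mul1mx mulmx1]. Qed.

Lemma equiv_refl r : disc_equiv r r.
Proof. by exists 1%:M; split; [exact: iso1 | rewrite mul1mx subrr; exact: intmx0]. Qed.

Lemma equiv_trans r x y : disc_equiv r x -> disc_equiv x y -> disc_equiv r y.
Proof.
case=> p1 [I1 O1] [p2 [I2 O2]]; exists (p2 *m p1); split; first exact: iso_mul.
have -> : p2 *m p1 *m r - y = p2 *m (p1 *m r - x) + (p2 *m x - y).
  by rewrite mulmxBr mulmxA addrA subrK.
by apply: intmxD => //; apply: intmxM => //; case: I2.
Qed.

Lemma equiv_omega r x y : disc_equiv r x -> in_Omega (x - y) -> disc_equiv r y.
Proof.
case=> p [I O] Hxy; exists p; split => //.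
have -> : p *m r - y = (p *m r - x) + (x - y) by rewrite addrA subrK.
exact: intmxD.
Qed.

Lemma equiv_sym r x : disc_equiv r x -> disc_equiv x r.
Proof.
case=> p [I O]; have [q [Iq Hqp Hpq]] := iso_inv I.
exists q; split => //.
have -> : q *m x - r = - (q *m (p *m r - x)) by rewrite mulmxBr mulmxA Hqp mul1mx opprB.
by apply: intmxN; apply: intmxM => //; case: Iq.
Qed.

Lemma omega_dual v : in_Omega v -> in_dual v.
Proof. by move=> H; apply: intmxM => //; exact: G_int. Qed.

Lemma iso_G psi : isometry_Omega psi -> exists phi, intmx phi /\ G *m psi = phi *m G.
Proof.
move=> I; have [q [Iq Hqp Hpq]] := iso_inv I.
exists q^T; split; first by case: Iq => Hq _; exact: intmxT.
case: I => _ E; rewrite -{2}E !mulmxA -trmx_mul Hpq trmx1 mul1mx.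
by [].
Qed.

Lemma iso_dual psi r : isometry_Omega psi -> in_dual r -> in_dual (psi *m r).
Proof.
move=> I Hr; have [phi [Hphi E]] := iso_G I.
by rewrite /in_dual mulmxA E -mulmxA; apply: intmxM.
Qed.

Lemma equiv_dual r x : in_dual r -> disc_equiv r x -> in_dual x.
Proof.
move=> Hr [p [I O]].
have -> : x = p *m r - (p *m r - x) by rewrite opprB addrC subrK.
rewrite /in_dual mulmxBr; apply: intmxB; first exact: iso_dual.
by apply: omega_dual.
Qed.

Definition bil (u v : 'cV[rat]_12) := (u^T *m G *m v) 0 0.

Lemma bil_sym u v : bil u v = bil v u.
Proof.
rewrite /bil; transitivity ((u^T *m G *m v)^T 0 0); first by rewrite [RHS]mxE.
by rewrite !trmx_mul trmxK G_sym mulmxA.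
Qed.

Lemma entryB (A B : 'M[rat]_1) : (A - B) 0 0 = A 0 0 - B 0 0.
Proof. by rewrite !mxE. Qed.
Lemma entryD (A B : 'M[rat]_1) : (A + B) 0 0 = A 0 0 + B 0 0.
Proof. by rewrite !mxE. Qed.
Lemma entryZ c (A : 'M[rat]_1) : (c *: A) 0 0 = c * A 0 0.
Proof. by rewrite !mxE. Qed.

Lemma sqnorm_sub a w : sqnorm (a - w) = sqnorm a - 2 * bil a w + sqnorm w.
Proof.
rewrite /sqnorm.
have -> : (a - w)^T = a^T - w^T by apply/matrixP => i j; rewrite !mxE.
rewrite !mulmxBl !mulmxBr !entryB -/(bil a w) -/(bil w a) (bil_sym w a).
rewrite -/(sqnorm a) -/(sqnorm w); ring.
Qed.

Lemma sqnorm_iso psi r : isometry_Omega psi -> sqnorm (psi *m r) = sqnorm r.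
Proof.
case=> _ E; rewrite /sqnorm.
have -> : (psi *m r)^T *m G *m (psi *m r) = r^T *m (psi^T *m G *m psi) *m r.
  by rewrite trmx_mul !mulmxA.
by rewrite E.
Qed.

Lemma bil_int a w : in_dual a -> in_Omega w -> bil a w \is a Num.int.
Proof.
move=> Ha Hw; rewrite /bil -{1}G_sym -trmx_mul.
by apply: intmxM => //; apply: intmxT.
Qed.

Lemma sqnorm_even w : in_Omega w -> sqnorm w / 2 \is a Num.int.
Proof.
move=> Hw.
have E1 : (w^T *m (mx Ul)^T *m w) 0 0 = (w^T *m mx Ul *m w) 0 0.
  transitivity ((w^T *m (mx Ul)^T *m w)^T 0 0); first by rewrite [RHS]mxE.
  by rewrite !trmx_mul !trmxK mulmxA.
have -> : sqnorm w = -4 * (w^T *m w) 0 0 + 2 * (w^T *m mx Ul *m w) 0 0.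
  rewrite /sqnorm G_split !mulmxDr !mulmxDl !entryD E1.
  rewrite -scalemxAr mulmx1 -scalemxAl entryZ; ring.
have -> : (-4 * (w^T *m w) 0 0 + 2 * (w^T *m mx Ul *m w) 0 0) / 2
    = -2 * (w^T *m w) 0 0 + (w^T *m mx Ul *m w) 0 0 by field.
apply: rpredD; first apply: rpredM; first by rewrite rpredN; apply: rpred_nat.
  by apply: intmxM => //; apply: intmxT.
by apply: intmxM => //; apply: intmxM => //; [apply: intmxT | apply: Ul_int].
Qed.

Lemma inv_order r x (k : nat) : disc_equiv r x -> in_Omega (k%:R *: r) -> in_Omega (k%:R *: x).
Proof.
case=> p [[Ip _] O] H.
have -> : k%:R *: x = p *m (k%:R *: r) - k%:R *: (p *m r - x).
  by rewrite -scalemxAr scalerBr opprB addrC subrK.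
by apply: intmxB; [apply: intmxM | apply: intmxZn].
Qed.

Lemma inv_q r x c : in_dual r -> disc_equiv r x -> disc_q_is r c -> disc_q_is x c.
Proof.
move=> Hr [p [I O]] Hq.
have Hx : x = p *m r - (p *m r - x) by rewrite opprB addrC subrK.
rewrite /disc_q_is Hx sqnorm_sub sqnorm_iso //.
have -> : (sqnorm r - 2 * bil (p *m r) (p *m r - x) + sqnorm (p *m r - x) - c) / 2
  = (sqnorm r - c) / 2 - bil (p *m r) (p *m r - x) + sqnorm (p *m r - x) / 2 by field.
apply: rpredD; first apply: rpredB => //.
  by apply: bil_int => //; apply: iso_dual.
exact: sqnorm_even.
Qed.

Definition inT (x : 'cV[rat]_12) := exists u, in_dual u /\ in_Omega (x - 2%:R *: u).
Definition inN (x : 'cV[rat]_12) := exists y, in_Omega (y - x) /\ sqnorm y = -1.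

Lemma inv_T r x : disc_equiv r x -> inT r -> inT x.
Proof.
case=> p [I O] [u [Hu Hru]]; exists (p *m u); split; first exact: iso_dual.
have -> : x - 2%:R *: (p *m u) = p *m (r - 2%:R *: u) - (p *m r - x).
  by rewrite mulmxBr -scalemxAr opprB [RHS]addrC addrA subrK.
by apply: intmxB => //; apply: intmxM => //; case: I.
Qed.

Lemma inv_N r x : disc_equiv r x -> inN r -> inN x.
Proof.
case=> p [I O] [y [Hy Hn]]; exists (p *m y); split; last by rewrite sqnorm_iso.
have -> : p *m y - x = p *m (y - r) + (p *m r - x) by rewrite mulmxBr addrA subrK.
by apply: intmxD => //; apply: intmxM => //; case: I.
Qed.

Definition fracq (a : rat) : rat := ((numq a %% denq a)%Z)%:~R / (denq a)%:~R.

Lemma fracq_int a : (a - fracq a) \is a Num.int.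
Proof.
rewrite -{1}(divq_num_den a) {1}(divz_eq (numq a) (denq a)) /fracq.
have hd : (denq a)%:~R != 0 :> rat by rewrite intr_eq0 denq_neq0.
have -> : ((numq a %/ denq a)%Z * denq a + (numq a %% denq a)%Z)%:~R / (denq a)%:~R
   - ((numq a %% denq a)%Z)%:~R / (denq a)%:~R = ((numq a %/ denq a)%Z)%:~R :> rat.
  by rewrite intrD intrM; field.
by apply/intrP; eexists.
Qed.

Lemma fracq0 : fracq 0 = 0.
Proof. by apply/eqP; vm_compute. Qed.

Lemma frac_omega l : in_Omega (cv l - cv (map fracq l)).
Proof.
move=> i j; rewrite !mxE (nth_map0 (f := fracq)) ?fracq0 //; exact: fracq_int.
Qed.

Definition act (g : seq (seq rat)) (x : seq rat) : seq rat := map fracq (mulmv g x).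
Definition gens_l := [:: gen0_l; gen1_l].

Lemma gens_iso g : g \in gens_l -> isometry_Omega (mx g).
Proof.
rewrite !inE => /orP [] /eqP ->; split;
  (try by apply: isintmP; vm_compute);
  by rewrite gram_mx mx_tr !mx_mul; apply: eqmP; vm_compute.
Qed.

Lemma act_equiv r x g : g \in gens_l -> disc_equiv r (cv x) -> disc_equiv r (cv (act g x)).
Proof.
move=> Hg H; apply: (equiv_trans H); exists (mx g); split; first exact: gens_iso.
rewrite mx_mv; exact: frac_omega.
Qed.

Definition nexts (fr : seq (seq rat)) := [seq act g x | x <- fr, g <- gens_l].
Arguments nexts : simpl never.

Fixpoint bfs (fuel : nat) (seen frontier : seq (seq rat)) : seq (seq rat) :=
  if fuel is f.+1 then
    let nw := undup [seq y <- nexts frontier | y \notin seen] in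
    if nw is [::] then seen else bfs f (seen ++ nw) nw
  else seen.
Definition orbit (r : seq rat) := bfs 100 [:: r] [:: r].

Lemma bfs_inv (P : seq rat -> Prop) fuel seen fr :
  (forall x g, g \in gens_l -> P x -> P (act g x)) ->
  (forall x, x \in seen -> P x) -> (forall x, x \in fr -> P x) ->
  forall x, x \in bfs fuel seen fr -> P x.
Proof.
move=> Hact; elim: fuel seen fr => [|f IH] seen fr Hs Hf //=.
set nw := undup _.
have Hn : forall x, x \in nw -> P x.
  move=> x; rewrite mem_undup mem_filter /nexts => /andP [_ /allpairsP [[y g] [/= Hy Hg ->]]].
  by apply: Hact => //; apply: Hf.
case E : nw => [|a l]; first exact: Hs.
rewrite -E; apply: IH => // x; rewrite mem_cat => /orP [] ?; [exact: Hs | exact: Hn].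
Qed.

Lemma orbit_equiv r x : x \in orbit r -> disc_equiv (cv r) (cv x).
Proof.
apply: (@bfs_inv (fun y => disc_equiv (cv r) (cv y))) => [y g Hg|y|y]; first exact: act_equiv.
  by rewrite inE => /eqP ->; apply: equiv_refl.
by rewrite inE => /eqP ->; apply: equiv_refl.
Qed.

Definition zero12 : seq rat := nseq 12 0.
Definition orbs := map orbit reps_l.
Definition Lall := zero12 :: flatten orbs.
Definition unitl (j : nat) : seq rat := mkseq (fun i => (i == j)%:R) 12.
Definition colGi (j : nat) := mulmv Gi_l (unitl j).

Definition digit (a : rat) : BinNums.N := BinNat.N.of_nat (absz (numq (a * 4%:R))).
Definition code (l : seq rat) : BinNums.N := foldr (fun a acc => BinNat.N.add (BinNat.N.mul (BinNums.Npos (BinNums.xO (BinNums.xO BinNums.xH))) acc) (digit a)) BinNums.N0 l.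
Definition lookup (L : seq (seq rat)) (codes : seq BinNums.N) (t : seq rat) :=
  let c := code t in nth [::] L (find (fun k => BinNat.N.eqb k c) codes).
Definition closure_check (cs : seq (seq rat)) (L : seq (seq rat)) :=
  let codes := map code L in
  all (fun l => all (fun c => let t := map fracq (addl l c) in lookup L codes t == t) cs) L.
Definition colsGi := map colGi (iota 0 12).
Definition closure_ok := closure_check colsGi Lall.
Definition col4_ok := all (fun j => isintl (scalel 4 (colGi j))) (iota 0 12).

Definition vec01 (l : seq rat) := (size l == 12) && all (fun x => (0 <= x) && (x < 1)) l.
Definition T0check (L : seq (seq rat)) :=
  all (fun y => ~~ isintl (subl (nth [::] reps_l 0) (scalel 2 y))) L.

Definition big_check (os : seq (seq (seq rat))) :=
  let L := zero12 :: flatten os in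
  [&& map size os == [:: 108; 3; 108; 36; 384; 384]%N,
      all (fun l => uniq (map code l)) os,
      all (fun l => all vec01 l) os,
      closure_check colsGi L &
      T0check L].

Lemma big_ok : big_check orbs = true.
Proof. vm_compute. reflexivity. Qed.

Lemma size_orbs : size orbs = 6%N.
Proof. by rewrite size_map. Qed.

Lemma orbs_nth i : (i < 6)%N -> nth [::] orbs i = orbit (nth [::] reps_l i).
Proof. by move=> Hi; rewrite /orbs (nth_map [::]). Qed.

Opaque orbs.

Lemma col4_true : col4_ok = true.
Proof. vm_compute. reflexivity. Qed.

Lemma orbs_size : map size orbs = [:: 108; 3; 108; 36; 384; 384]%N.
Proof. by have /and5P [/eqP -> _ _ _ _] := big_ok. Qed.

Lemma closure_true : closure_check colsGi Lall.
Proof. by have /and5P [_ _ _ H _] := big_ok. Qed.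

Lemma T0_true : T0check Lall.
Proof. by have /and5P [_ _ _ _ H] := big_ok. Qed.

Lemma orbs_uniq L : L \in orbs -> uniq L.
Proof.
have /and5P [_ /allP H _ _ _] := big_ok.
by move=> HL; apply: (@map_uniq _ _ code); apply: H.
Qed.

Lemma orbs_vec01 L : L \in orbs -> all vec01 L.
Proof. by have /and5P [_ _ /allP H _ _] := big_ok; apply: H. Qed.

Definition PL (v : 'cV[rat]_12) := exists2 l, l \in Lall & in_Omega (v - cv l).

Lemma lookup_mem L codes t : t != [::] -> lookup L codes t == t -> t \in L.
Proof.
rewrite /lookup => Ht /eqP H.
set i := find _ _ in H.
case: (ltnP i (size L)) => Hi; first by rewrite -H mem_nth.
by rewrite nth_default in H => //; rewrite -H in Ht.
Qed.

Lemma PL_addc v c : c \in colsGi -> PL v -> PL (v + cv c).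
Proof.
move=> Hc [l Hl Hv].
have /allP /(_ c Hc) H := allP closure_true l Hl.
exists (map fracq (addl l c)).
  apply: lookup_mem H; by rewrite -size_eq0 size_map /addl size_mkseq.
have -> : v + cv c - cv (map fracq (addl l c))
   = (v - cv l) + (cv (addl l c) - cv (map fracq (addl l c))).
  by rewrite -cv_add; apply/matrixP => i j; rewrite !mxE; ring.
by apply: intmxD => //; apply: frac_omega.
Qed.

Lemma PL_addn v c (n : nat) : c \in colsGi -> PL v -> PL (v + n%:R *: cv c).
Proof.
move=> Hc Hv; elim: n => [|n IH]; first by rewrite scale0r addr0.
have -> : v + n.+1%:R *: cv c = (v + n%:R *: cv c) + cv c.
  by rewrite mulrSr scalerDl scale1r addrA.
exact: PL_addc.
Qed.

Lemma col4 c : c \in colsGi -> in_Omega (4%:R *: cv c).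
Proof.
move=> /mapP [j Hj ->]; rewrite cv_scale; apply/isintlP.
by have /allP := col4_true; apply.
Qed.

Lemma PL_subc v c : c \in colsGi -> PL v -> PL (v - cv c).
Proof.
move=> Hc Hv; have [l Hl H] := PL_addn 3 Hc Hv; exists l => //.
have -> : v - cv c - cv l = (v + 3%:R *: cv c - cv l) - 4%:R *: cv c.
  by apply/matrixP => i j; rewrite !mxE; ring.
by apply: intmxB => //; apply: col4.
Qed.

Lemma PL_subn v c (n : nat) : c \in colsGi -> PL v -> PL (v - n%:R *: cv c).
Proof.
move=> Hc Hv; elim: n => [|n IH]; first by rewrite scale0r subr0.
have -> : v - n.+1%:R *: cv c = (v - n%:R *: cv c) - cv c.
  by rewrite mulrSr scalerDl scale1r opprD addrA.
exact: PL_subc.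
Qed.

Lemma PL_addz v c (k : int) : c \in colsGi -> PL v -> PL (v + k%:~R *: cv c).
Proof.
move=> Hc Hv; case: k => n; first exact: PL_addn.
rewrite NegzE mulrNz scaleNr; exact: PL_subn.
Qed.

Lemma colGi_in (j : 'I_12) : colGi j \in colsGi.
Proof. by apply: map_f; apply: mem_iota12. Qed.

Lemma PL_sum v (s : seq 'I_12) (a : 'I_12 -> int) :
  PL v -> PL (v + \sum_(j <- s) (a j)%:~R *: cv (colGi j)).
Proof.
elim: s v => [|j s IH] v Hv; first by rewrite big_nil addr0.
rewrite big_cons addrA; apply: IH; apply: PL_addz => //; exact: colGi_in.
Qed.

Lemma int_numq (x : rat) : x \is a Num.int -> (numq x)%:~R = x.
Proof. by move=> /isintP /eqP H; rewrite -{2}(divq_num_den x) H divr1. Qed.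

Lemma delta_cv (j : 'I_12) : delta_mx j (0 : 'I_1) = cv (unitl j).
Proof.
apply/matrixP => i k; rewrite !mxE /unitl nth_mkseq // (ord1 k) eqxx andbT.
by [].
Qed.

Lemma PL_dual v : in_dual v -> PL v.
Proof.
move=> Hv.
have -> : v = mx Gi_l *m (G *m v) by rewrite mulmxA GiG mul1mx.
rewrite [G *m v]matrix_sum_delta mulmx_sumr.
have -> : \sum_(i < 12) mx Gi_l *m (\sum_(j < 1) (G *m v) i j *: delta_mx i j)
  = 0 + \sum_(i < 12) ((numq ((G *m v) i 0))%:~R *: cv (colGi i)).
  rewrite add0r; apply: eq_bigr => i _; rewrite big_ord1 int_numq; last exact: Hv.
  by rewrite -scalemxAr delta_cv mx_mv.
apply: PL_sum; exists zero12; first exact: mem_head.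
by move=> i j; rewrite !mxE nth_nseq; case: ifP.
Qed.

Definition negGl : seq (seq rat) := mkseq (fun i => mkseq (fun j => - nth2 Gl i j) 12) 12.
Definition outer (f : seq rat) : seq (seq rat) := mkseq (fun i => mkseq (fun j => f`_i * f`_j) 12) 12.
Definition diagl (d : seq rat) : seq (seq rat) := mkseq (fun i => mkseq (fun j => (i == j)%:R * d`_i) 12) 12.

Lemma negG_mx : mx negGl = - G.
Proof. by rewrite gram_mx; apply/matrixP => i j; rewrite !mxE /nth2 /negGl nth_mkseq // nth_mkseq. Qed.

Lemma outer_mx f : mx (outer f) = cv f *m (cv f)^T.
Proof.
apply/matrixP => i j; rewrite !mxE /nth2 /outer nth_mkseq // nth_mkseq // big_ord1.
by rewrite !mxE.
Qed.

Lemma diag_psd d (z : 'cV[rat]_12) : all (fun a => 0 <= a) d -> 0 <= (z^T *m mx (diagl d) *m z) 0 0.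
Proof.
move=> /allP Hd; rewrite mxE; apply: sumr_ge0 => i _.
have -> : (z^T *m mx (diagl d)) 0 i = z i 0 * d`_i.
  rewrite mxE (bigD1 i) //= big1 ?addr0.
    by rewrite !mxE /nth2 /diagl nth_mkseq // nth_mkseq // eqxx mul1r.
  move=> k /negbTE Hk; rewrite !mxE /nth2 /diagl nth_mkseq // nth_mkseq //.
  by rewrite (inj_eq val_inj) Hk mul0r mulr0.
have Hdi : 0 <= d`_i.
  case: (ltnP i (size d)) => Hi; first by apply: Hd; apply: mem_nth.
  by rewrite nth_default.
by rewrite mulrAC -expr2 mulr_ge0 // sqr_ge0.
Qed.

Lemma entryM1 (A B : 'M[rat]_1) : (A *m B) 0 0 = A 0 0 * B 0 0.
Proof. by rewrite mxE big_ord1. Qed.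

Definition cert_ok (f : seq rat) (L : seq (seq rat)) (d : seq rat) :=
  all (fun a => 0 <= a) d && eqm negGl (addm (outer f) (mulmm (mulmm (trl L) (diagl d)) L)).

Lemma cs_k f L d (y : 'cV[rat]_12) : cert_ok f L d -> ((cv f)^T *m y) 0 0 ^+ 2 <= - sqnorm y.
Proof.
move=> /andP [Hd /eqmP He].
have -> : - sqnorm y = (y^T *m mx negGl *m y) 0 0.
  by rewrite negG_mx mulmxN mulNmx [RHS]mxE.
rewrite He -mx_add -!mx_mul -mx_tr outer_mx !mulmxDr !mulmxDl entryD.
have -> : (y^T *m (cv f *m (cv f)^T) *m y) 0 0 = ((cv f)^T *m y) 0 0 ^+ 2.
  rewrite mulmxA -mulmxA entryM1 expr2; congr (_ * _).
  transitivity ((y^T *m cv f)^T 0 0); first by rewrite [RHS]mxE.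
  by rewrite trmx_mul trmxK.
have -> : y^T *m ((mx L)^T *m mx (diagl d) *m mx L) *m y
    = (mx L *m y)^T *m mx (diagl d) *m (mx L *m y) by rewrite trmx_mul !mulmxA.
by rewrite lerDl; apply: diag_psd.
Qed.

Lemma half_sq (s : rat) : (s - 1/2) \is a Num.int -> s ^+ 2 <= 1 -> (s == 1/2) || (s == - (1/2)).
Proof.
move=> /intrP [z Hz] Hs.
have Es : s = z%:~R + 1/2 by rewrite -Hz subrK.
rewrite Es in Hs *.
case: (lerP 1 z) => [H1|H1].
  have H1' : (1 : rat) <= z%:~R by rewrite ler1z.
  exfalso; move: Hs; apply/negP; rewrite -ltNge; nra.
case: (lerP z (-2)) => [H2|H2].
  have H2' : z%:~R <= (-2 : rat) by rewrite -(ler_int rat) in H2.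
  exfalso; move: Hs; apply/negP; rewrite -ltNge; nra.
have : (z = 0) \/ (z = -1) by lia.
by case => ->; apply/orP; [left | right]; apply/eqP; rewrite ?intr0 ?intrN ?intr1; field.
Qed.

Fixpoint signs (n : nat) : seq (seq rat) :=
  if n is n'.+1 then [seq a :: l | a <- [:: 1/2; - (1/2)], l <- signs n'] else [:: [::]].

Lemma signsS n : signs n.+1 = [seq a :: l | a <- [:: 1/2; - (1/2)], l <- signs n].
Proof. by []. Qed.

Lemma signs_mem (t : seq rat) : all (fun a => (a == 1/2) || (a == - (1/2))) t -> t \in signs (size t).
Proof.
elim: t => [|a t IH]; first by rewrite inE.
move=> /andP [Ha Ht]; change (a :: t \in signs (size t).+1); rewrite signsS.
by apply/allpairsP; exists (a, t); split => //=; [rewrite !inE | apply: IH].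
Qed.

Definition N2check :=
  let r2 := nth [::] reps_l 2 in
  all (fun t => let y := mulmv Finv_l t in ~~ (isintl (subl y r2) && (sqn y == -1))) (signs 12).

Definition cs_check :=
  [&& all (fun k => cert_ok (nth [::] F_l k) (nth [::] certL_l k) (nth [::] certd_l k)) (iota 0 12),
      isintm F_l,
      eqm (mulmm Finv_l F_l) idl &
      all (fun k => isint ((mulmv F_l (nth [::] reps_l 2))`_k - 1/2)) (iota 0 12)].

Lemma cs_true : cs_check = true.
Proof. vm_compute. reflexivity. Qed.

Lemma N2_true : N2check = true.
Proof. vm_compute. reflexivity. Qed.

Lemma sqnorm_cv l : sqnorm (cv l) = sqn l.
Proof.
rewrite /sqnorm gram_mx -mulmxA mx_mv mxE /sqn /dotl sum12E.
by apply: eq_bigr => i _; rewrite !mxE.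
Qed.

Lemma notN2 : ~ inN (cv (nth [::] reps_l 2)).
Proof.
case=> y [Hy Hn].
have /and4P [/allP Hc HF /eqmP HFF /allP Hh] := cs_true.
set r2 := nth [::] reps_l 2 in Hy Hh *.
have Hk : forall k : 'I_12, let s := (mx F_l *m y) k 0 in (s == 1/2) || (s == - (1/2)).
  move=> k /=; apply: half_sq.
    have E : mx F_l *m y = mx F_l *m (y - cv r2) + cv (mulmv F_l r2).
      by rewrite mulmxBr mx_mv subrK.
    rewrite E mxE [cv _ k 0]mxE -addrA; apply: rpredD.
      exact: (intmxM (isintmP HF) Hy).
    by apply/isintP; apply: Hh; apply: mem_iota12.
  have -> : (mx F_l *m y) k 0 = ((cv (nth [::] F_l k))^T *m y) 0 0.
    by rewrite !mxE; apply: eq_bigr => i _; rewrite !mxE.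
  have := cs_k y (Hc k (mem_iota12 k)); by rewrite Hn opprK.
set t := mkseq (fun k => (mx F_l *m y) (inord k) 0) 12.
have Ht : cv t = mx F_l *m y.
  by apply/matrixP => i j; rewrite [LHS]mxE /t nth_mkseq // inord_val (ord1 j).
have Hs : all (fun a => (a == 1/2) || (a == - (1/2))) t.
  by apply/allP => a /mapP [k _ ->]; apply: Hk.
have Hmem : t \in signs 12 by have := signs_mem Hs; rewrite size_mkseq.
have Ey : y = cv (mulmv Finv_l t).
  rewrite -mx_mv Ht mulmxA mx_mul HFF mx_id mul1mx //.
have /allP /(_ t Hmem) /= := N2_true.
rewrite -/r2; apply/negP/negPn; apply/andP; split.
  by apply/isintlP; rewrite -cv_sub -Ey.
by rewrite -sqnorm_cv -Ey Hn.
Qed.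

Definition Rn (n : nat) : 'cV[rat]_12 := cv (nth [::] reps_l n).
Definition qvl : seq rat := [:: 0; 0; 1; 1; 1/2; 3/2].
Definition qcl : seq nat := [:: 0; 0; 1; 1; 2; 3]%N.

Definition reps_check :=
  [&& all (fun r => isintl (mulmv Gl r) && ~~ isintl r) reps_l,
      all (fun i => isintl (scalel 2 (nth [::] reps_l i))) (iota 0 4),
      all (fun i => let r := nth [::] reps_l i in
              [&& ~~ isintl (scalel 2 r), ~~ isintl (scalel 3 r) & isintl (scalel 4 r)]) (iota 4 2),
      all (fun i => isint ((sqn (nth [::] reps_l i) - qvl`_i) / 2)) (iota 0 6) &
      (all (fun i => all (fun j => isint ((qvl`_i - qvl`_j) / 2) ==> (nth 0%N qcl i == nth 0%N qcl j))
                      (iota 0 6)) (iota 0 6) &&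
      ((isintl (mulmv Gl u1_l) && isintl (subl (nth [::] reps_l 1) (scalel 2 u1_l))) &&
      (isintl (subl y3_l (nth [::] reps_l 3)) && (sqn y3_l == -1))))].

Lemma reps_true : reps_check = true.
Proof. vm_compute. reflexivity. Qed.

Lemma dualP r : isintl (mulmv Gl r) -> in_dual (cv r).
Proof. by move=> H; rewrite /in_dual gram_mx mx_mv; apply/isintlP. Qed.

Lemma mem_iota6 i : (i < 6)%N -> i \in iota 0 6.
Proof. by rewrite mem_iota. Qed.

Lemma Rn_dual i : (i < 6)%N -> in_dual (Rn i) /\ ~ in_Omega (Rn i).
Proof.
move=> Hi; have /and5P [/allP H _ _ _ _] := reps_true.
have /andP [H1 H2] := H _ (mem_nth [::] (Hi : (i < size reps_l)%N)).
by split; [apply: dualP | apply/isintlP].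
Qed.

Lemma Rn_ord2 i : (i < 4)%N -> in_Omega (2%:R *: Rn i).
Proof.
move=> Hi; have /and5P [_ /allP H _ _ _] := reps_true.
by rewrite /Rn cv_scale; apply/isintlP; apply: H; rewrite mem_iota.
Qed.

Lemma Rn_ord4 i : (4 <= i < 6)%N -> [/\ ~ in_Omega (2%:R *: Rn i), ~ in_Omega (3%:R *: Rn i)
   & in_Omega (4%:R *: Rn i)].
Proof.
move=> Hi; have /and5P [_ _ /allP H _ _] := reps_true.
have Hm : i \in iota 4 2 by rewrite mem_iota.
have /and3P [H2 H3 H4] := H i Hm.
by rewrite /Rn !cv_scale; split; apply/isintlP.
Qed.

Lemma Rn_q i : (i < 6)%N -> disc_q_is (Rn i) qvl`_i.
Proof.
move=> Hi; have /and5P [_ _ _ /allP H _] := reps_true.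
by rewrite /disc_q_is /Rn sqnorm_cv; apply/isintP; apply: H; apply: mem_iota6.
Qed.

Lemma q_contra x c1 c2 : disc_q_is x c1 -> disc_q_is x c2 -> (c1 - c2) / 2 \is a Num.int.
Proof.
rewrite /disc_q_is => H1 H2.
have -> : (c1 - c2) / 2 = (sqnorm x - c2) / 2 - (sqnorm x - c1) / 2 by field.
exact: rpredB.
Qed.

Lemma sep_ord i j : (i < 6)%N -> (j < 6)%N -> disc_equiv (Rn i) (Rn j) -> (i < 4)%N = (j < 4)%N.
Proof.
have A : forall a b, (b < 6)%N -> disc_equiv (Rn a) (Rn b) -> (a < 4)%N -> (b < 4)%N.
  move=> a b Hb H Ha; case: (ltnP b 4) => // Hb4; exfalso.
  have Hb' : (4 <= b < 6)%N by rewrite Hb4 Hb.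
  have [H2 _ _] := Rn_ord4 Hb'.
  by apply: H2; apply: inv_order H (Rn_ord2 Ha).
move=> Hi Hj H; apply/idP/idP; [exact: A | exact: A _ _ Hi (equiv_sym H)].
Qed.

Lemma sep_q i j : (i < 6)%N -> (j < 6)%N -> disc_equiv (Rn i) (Rn j) -> nth 0%N qcl i = nth 0%N qcl j.
Proof.
move=> Hi Hj H.
have Hq := inv_q (proj1 (Rn_dual Hi)) H (Rn_q Hi).
have Hc := q_contra Hq (Rn_q Hj).
have /and5P [_ _ _ _ /andP [/allP H5 _]] := reps_true.
have /allP := H5 i (mem_iota6 Hi); move/(_ j (mem_iota6 Hj)) => /implyP.
by move/(_ (introT (isintP _) Hc)) => /eqP.
Qed.

Lemma notT0 : ~ inT (Rn 0).
Proof.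
case=> u [Hu Hr]; have [l Hl Hul] := PL_dual Hu.
have /allP /(_ l Hl) := T0_true; apply/negP/negPn.
apply/isintlP; rewrite -cv_sub -cv_scale.
have -> : Rn 0 - 2%:R *: cv l = (Rn 0 - 2%:R *: u) + 2%:R *: (u - cv l).
  by apply/matrixP => i j; rewrite !mxE; ring.
by apply: intmxD => //; apply: intmxZn.
Qed.

Lemma T1 : inT (Rn 1).
Proof.
have /and5P [_ _ _ _ /andP [_ /andP [/andP [H1 H2] _]]] := reps_true.
exists (cv u1_l); split; first exact: dualP.
by rewrite cv_scale cv_sub; apply/isintlP.
Qed.

Lemma N3 : inN (Rn 3).
Proof.
have /and5P [_ _ _ _ /andP [_ /andP [_ /andP [H1 /eqP H2]]]] := reps_true.
by exists (cv y3_l); split; [rewrite cv_sub; apply/isintlP | rewrite sqnorm_cv].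
Qed.

Lemma sep i j : (i < 6)%N -> (j < 6)%N -> disc_equiv (Rn i) (Rn j) -> i = j.
Proof.
move=> Hi Hj H; have O := sep_ord Hi Hj H; have Q := sep_q Hi Hj H.
have ST : disc_equiv (Rn 1) (Rn 0) -> False by move=> H'; apply: notT0; apply: inv_T H' T1.
have SN : disc_equiv (Rn 3) (Rn 2) -> False by move=> H'; apply: notN2; apply: inv_N H' N3.
move: i j Hi Hj H O Q.
case=> [|[|[|[|[|[|i]]]]]] [|[|[|[|[|[|j]]]]]] //= _ _ H _ _.
all: try by case: ST; apply: equiv_sym.
all: by case: SN; apply: equiv_sym.
Qed.

Lemma order2 v : in_Omega (2%:R *: v) -> ~ in_Omega v -> disc_order_is v 2.
Proof.
move=> H2 H1; split => //; split => //.
move=> m Hm0 Hm2; have -> : m = 1%N by lia.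
by rewrite mulr1n scale1r.
Qed.

Lemma order4 v : in_Omega (4%:R *: v) -> ~ in_Omega v -> ~ in_Omega (2%:R *: v) ->
  ~ in_Omega (3%:R *: v) -> disc_order_is v 4.
Proof.
move=> H4 H1 H2 H3; split => //; split => // m Hm0 Hm4.
case: m Hm0 Hm4 => [|[|[|[|m]]]] //= _ _; by rewrite ?mulr1n ?scale1r.
Qed.


Lemma orb_equiv i l : (i < 6)%N -> l \in nth [::] orbs i -> disc_equiv (Rn i) (cv l).
Proof. by move=> Hi; rewrite orbs_nth //; apply: orbit_equiv. Qed.

Lemma Lall_cases l : l \in Lall -> l = zero12 \/ exists2 i, (i < 6)%N & l \in nth [::] orbs i.
Proof.
rewrite /Lall in_cons => /orP [/eqP -> | /flattenP [L HL Hl]]; first by left.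
right; move: HL => /(nthP [::]) [i Hi E]; rewrite size_orbs in Hi.
by exists i => //; rewrite E.
Qed.

Lemma zero_cv : cv zero12 = 0.
Proof. by apply/matrixP => i j; rewrite !mxE nth_nseq; case: ifP. Qed.

Lemma small_int (z : int) (a : rat) : a = z%:~R -> -1 < a -> a < 1 -> a = 0.
Proof.
move=> -> h1 h2.
have ha : (-1 < z)%R by rewrite -(ltr_int rat) intrN mulr1z.
have hb : (z < 1)%R by rewrite -(ltr_int rat) mulr1z.
by have -> : z = 0 by lia.
Qed.

Lemma vec01_eq x y : vec01 x -> vec01 y -> in_Omega (cv x - cv y) -> x = y.
Proof.
move=> /andP [/eqP Sx /allP Hx] /andP [/eqP Sy /allP Hy] H.
apply: (@eq_from_nth _ 0); first by rewrite Sx Sy.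
move=> k; rewrite Sx => Hk.
have Hxk : x`_k \in x by rewrite mem_nth // Sx.
have Hyk : y`_k \in y by rewrite mem_nth // Sy.
have /andP [x0 x1] := Hx _ Hxk; have /andP [y0 y1] := Hy _ Hyk.
have := H (Ordinal Hk) 0; rewrite !mxE /= => /intrP [z Hz].
apply/eqP; rewrite -subr_eq0; apply/eqP; apply: (small_int Hz); lra.
Qed.

Lemma class_distinct L : all vec01 L -> uniq L -> forall a b, (a < size L)%N -> (b < size L)%N ->
  a <> b -> ~ in_Omega (nth 0 (map cv L) a - nth 0 (map cv L) b).
Proof.
move=> /allP HL HU a b Ha Hb Hab; rewrite !(nth_map [::]) // => H.
apply: Hab; apply/eqP; rewrite -(nth_uniq [::] Ha Hb HU); apply/eqP.
by apply: vec01_eq H; apply: HL; apply: mem_nth.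
Qed.

Lemma complete i x : (i < 6)%N -> in_dual x -> disc_equiv (Rn i) x ->
  exists2 l, l \in nth [::] orbs i & in_Omega (x - cv l).
Proof.
move=> Hi Hx H; have [l Hl Hxl] := PL_dual Hx.
have Hlx : in_Omega (cv l - x) by rewrite -opprB; apply: intmxN.
case: (Lall_cases Hl) => [El | [j Hj Hlj]].
  exfalso; rewrite El zero_cv subr0 in Hxl.
  have := @inv_order x (Rn i) 1%N (equiv_sym H); rewrite mulr1n !scale1r => /(_ Hxl).
  by case: (Rn_dual Hi).
have Hjx : disc_equiv (Rn j) x by apply: equiv_omega (orb_equiv Hj Hlj) Hlx.
have Eij := sep Hi Hj (equiv_trans H (equiv_sym Hjx)).
by exists l => //; rewrite Eij.
Qed.

Lemma class_card_gen i : (i < 6)%N -> disc_class_card (Rn i) (size (nth [::] orbs i)).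
Proof.
move=> Hi; have HL : nth [::] orbs i \in orbs by rewrite mem_nth // size_orbs.
exists (map cv (nth [::] orbs i)); split.
- by rewrite size_map.
- move=> x /mapP [l Hl ->]; have He := orb_equiv Hi Hl.
  split; last exact: He.
  exact: (equiv_dual (proj1 (Rn_dual Hi)) He).
- exact: (class_distinct (orbs_vec01 HL) (orbs_uniq HL)).
- move=> x Hx H; have [l Hl Hxl] := complete Hi Hx H.
  exists (cv l); [exact: map_f | exact: Hxl].
Qed.

Lemma orbs_size_nth i : size (nth [::] orbs i) = nth 0%N [:: 108; 3; 108; 36; 384; 384]%N i.
Proof.
case: (ltnP i 6) => Hi; last by rewrite !nth_default ?size_orbs.
by rewrite -orbs_size (nth_map [::]) ?size_orbs.
Qed.

Lemma main_i i : (i < 6)%N ->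
  let d := nth (0%N, 0, 0%N)
             [:: (2%N, 0, 108%N); (2%N, 0, 3%N); (2%N, 1, 108%N);
                 (2%N, 1, 36%N); (4%N, 1/2, 384%N); (4%N, 3/2, 384%N)] i in
  [/\ disc_order_is (Rn i) d.1.1, disc_q_is (Rn i) d.1.2 & disc_class_card (Rn i) d.2].
Proof.
move=> Hi; have Hc := class_card_gen Hi; rewrite orbs_size_nth in Hc.
have Hq := Rn_q Hi; have [_ Hn] := Rn_dual Hi.
have O2 := @Rn_ord2; have O4 := @Rn_ord4.
move: Hi Hc Hq Hn; case: i => [|[|[|[|[|[|i]]]]]] Hi; last by rewrite !ltnS ltn0 in Hi.
all: move=> Hc Hq Hn; split; [idtac | exact: Hq | exact: Hc].
- exact: order2 (O2 0%N isT) Hn.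
- exact: order2 (O2 1%N isT) Hn.
- exact: order2 (O2 2%N isT) Hn.
- exact: order2 (O2 3%N isT) Hn.
- by have [H2 H3 H4] := O4 4%N isT; apply: order4.
- by have [H2 H3 H4] := O4 5%N isT; apply: order4.
Qed.

Theorem proposition3p4 :
  exists r : 'I_6 -> 'cV[rat]_12,
    [/\ (forall i, in_dual (r i) /\ ~ in_Omega (r i)),
        (forall v, in_dual v -> ~ in_Omega v ->
           exists! i : 'I_6, disc_equiv (r i) v) &
        (forall i : 'I_6,
           let d := nth (0%N, 0, 0%N)
             [:: (2%N, 0, 108%N); (2%N, 0, 3%N); (2%N, 1, 108%N);
                 (2%N, 1, 36%N); (4%N, 1/2, 384%N); (4%N, 3/2, 384%N)] i in
           [/\ disc_order_is (r i) d.1.1,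
               disc_q_is (r i) d.1.2 &
               disc_class_card (r i) d.2])].
Proof.
exists (fun i : 'I_6 => Rn i); split.
- by move=> i; apply: Rn_dual.
- move=> v Hv Hnv; have [l Hl Hvl] := PL_dual Hv.
  case: (Lall_cases Hl) => [El | [j Hj Hlj]].
    by exfalso; apply: Hnv; rewrite El zero_cv subr0 in Hvl.
  have Hlv : in_Omega (cv l - v) by rewrite -opprB; apply: intmxN.
  have Hjv : disc_equiv (Rn j) v by apply: equiv_omega (orb_equiv Hj Hlj) Hlv.
  exists (Ordinal Hj); split => // k Hk; apply: val_inj => /=.
  exact: sep Hj (ltn_ord k) (equiv_trans Hjv (equiv_sym Hk)).
- by move=> i; apply: main_i.
Qed.
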